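(* Let $M$ be a magma satisfying $(xy)z = xz$ and $x(yz) = xy$ for all $x,y,z\in M$. Then $M$ satisfies $xy = xz$ and $(xy)z = xy$ for all $x,y,z\in M$ if and only if $M$ avoids both magmas $M_1$ (on $\{0,1,2\}$) and $M_2$ (on $\{0,1,2,3\}$) with Cayley tables \[ \begin{array}{c|ccc} M_1 & 0 & 1 & 2 \\ \hline 0 & 0 & 2 & 0 \\ 1 & 1 & 1 & 1 \\ 2 & 0 & 2 & 0 \end{array} \qquad \begin{array}{c|cccc} M_2 & 0 & 1 & 2 & 3 \\ \hline 0 & 0 & 2 & 0 & 2 \\ 1 & 1 & 3 & 1 & 3 \\ 2 & 0 & 2 & 0 & 2 \\ 3 & 1 & 3 & 1 & 3 \end{array}. \]
   Context: A magma is a nonempty set with a binary operation, written by juxtaposition. A magma $M$ avoids a magma $F$ if no submagma of $M$ is isomorphic to $F$. In the Cayley tables, the entry in row $i$, column $j$ is $i\cdot j$. *)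

(* Defs.v *)
From mathcomp Require Import all_boot.
Set Implicit Arguments. Unset Strict Implicit. Unset Printing Implicit Defensive.

Definition table_op (n : nat) (tbl : seq (seq nat)) (i j : 'I_n.+1) : 'I_n.+1 :=
  inord (nth 0 (nth [::] tbl i) j).

Definition M1_table : seq (seq nat) :=
  [:: [:: 0; 2; 0];
      [:: 1; 1; 1];
      [:: 0; 2; 0]].
Definition M1_op : 'I_3 -> 'I_3 -> 'I_3 := @table_op 2 M1_table.

Definition M2_table : seq (seq nat) :=
  [:: [:: 0; 2; 0; 2];
      [:: 1; 3; 1; 3];
      [:: 0; 2; 0; 2];
      [:: 1; 3; 1; 3]].
Definition M2_op : 'I_4 -> 'I_4 -> 'I_4 := @table_op 3 M2_table.

Definition submagma (T : Type) (op : T -> T -> T) (S : T -> Prop) : Prop :=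
  (exists x, S x) /\ (forall x y, S x -> S y -> S (op x y)).

Definition iso_to_sub (F T : Type) (fop : F -> F -> F) (op : T -> T -> T)
    (S : T -> Prop) : Prop :=
  exists f : F -> T,
    (forall a b, f a = f b -> a = b) /\
    (forall x, S x <-> exists a, f a = x) /\
    (forall a b, f (fop a b) = op (f a) (f b)).

Definition avoids (T F : Type) (op : T -> T -> T) (fop : F -> F -> F) : Prop :=
  ~ (exists S : T -> Prop, submagma op S /\ iso_to_sub fop op S).

(* Main.v *)
Require Import Defs.
From mathcomp Require Import all_boot.
From Stdlib Require Import Classical.

Lemma embed_not_avoid (F T : Type) (fop : F -> F -> F) (op : T -> T -> T) (f : F -> T) :
  (forall a b, f a = f b -> a = b) -> (forall a b, f (fop a b) = op (f a) (f b)) ->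
  F -> ~ avoids op fop.
Proof.
move=> inj hom a0 H; apply: H.
exists (fun t => exists a, f a = t); split; last by exists f.
split; first by exists (f a0); exists a0.
by move=> x y [a <-] [b <-]; exists (fop a b); rewrite hom.
Qed.

Ltac distinct := match goal with H: ?u <> ?v, E: ?u = ?v |- _ => exact: (False_ind _ (H E))
  | H: ?u <> ?v, E: ?v = ?u |- _ => exact: (False_ind _ (H (esym E))) end.

Theorem mainTheorem16 (T : Type) (op : T -> T -> T) :
  inhabited T ->
  (forall x y z, op (op x y) z = op x z) ->
  (forall x y z, op x (op y z) = op x y) ->
  ((forall x y z, op x y = op x z) /\ (forall x y z, op (op x y) z = op x y))
  <-> (avoids op M1_op /\ avoids op M2_op).
Proof.
move=> _ A B; split.
  move=> [H1 _]; split => -[S [_ [f [inj [_ hom]]]]].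
    have h1 := hom (@Ordinal 3 0 isT) (@Ordinal 3 1 isT).
    have h0 := hom (@Ordinal 3 0 isT) (@Ordinal 3 0 isT).
    rewrite (H1 _ _ (f (@Ordinal 3 0 isT))) -h0 in h1.
    by move/inj/(congr1 val): h1; rewrite /M1_op /M2_op /table_op /= !inordK.
  have h1 := hom (@Ordinal 4 0 isT) (@Ordinal 4 1 isT).
  have h0 := hom (@Ordinal 4 0 isT) (@Ordinal 4 0 isT).
  rewrite (H1 _ _ (f (@Ordinal 4 0 isT))) -h0 in h1.
  by move/inj/(congr1 val): h1; rewrite /M1_op /M2_op /table_op /= !inordK.
move=> [av1 av2].
have key : forall x y, op x y = op x x.
  move=> x y; apply: NNPP => hne.
  set e := op x x; set b := op y e; set c := op e b; set d := op y y.
  have ce : c = op x y by rewrite /c /b B /e A.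
  have F1 : op e e = e by rewrite /e A B.
  have F2 : op e c = e by rewrite /c B F1.
  have F3 : op e d = c by rewrite /d B /c /b B.
  have Rb : forall w, op b w = op y w by move=> w; rewrite /b A.
  have Rd : forall w, op d w = op y w by move=> w; rewrite /d A.
  have Rc : forall w, op c w = op e w by move=> w; rewrite /c A.
  have F4 : op y e = b by [].
  have F5 : op y b = d by rewrite /b B.
  have F6 : op y c = b by rewrite /c B.
  have F7 : op y d = d by rewrite /d B.
  have nce : c <> e by rewrite ce.
  have neb : e <> b by move=> E; apply: nce; rewrite /c -E F1.
  have ned : e <> d by move=> E; apply: nce; rewrite -F3 -E F1.
  have ncb : c <> b by move=> E; apply: neb; rewrite -F4 -Rb -E Rc F1.
  have ncd : c <> d by move=> E; apply: neb; rewrite -F4 -Rd -E Rc F1.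
  case: (classic (b = d)) => [Ebd | nbd].
    pose g n := match n with 0 => e | 1 => b | _ => c end.
    apply: (@embed_not_avoid _ _ _ _ (fun i : 'I_3 => g (val i)) _ _ ord0 av1).
      move=> [[|[|[|?]]] Hi] [[|[|[|?]]] Hj] //= E; try (by apply: val_inj); distinct.
    move=> [[|[|[|?]]] Hi] [[|[|[|?]]] Hj] //=; rewrite /M1_op /table_op inordK //=;
      rewrite ?Rb ?Rc ?Rd ?F1 ?F2 ?F3 ?F4 ?F5 ?F6 ?F7 //.
  pose g n := match n with 0 => e | 1 => b | 2 => c | _ => d end.
  apply: (@embed_not_avoid _ _ _ _ (fun i : 'I_4 => g (val i)) _ _ ord0 av2).
    move=> [[|[|[|[|?]]]] Hi] [[|[|[|[|?]]]] Hj] //= E; try (by apply: val_inj); distinct.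
  move=> [[|[|[|[|?]]]] Hi] [[|[|[|[|?]]]] Hj] //=; rewrite /M2_op /table_op inordK //=;
    rewrite ?Rb ?Rc ?Rd ?F1 ?F2 ?F3 ?F4 ?F5 ?F6 ?F7 //.
have H1 : forall x y z, op x y = op x z by move=> x y z; rewrite key (key x z).
split=> // x y z; rewrite A; exact: H1.
Qed.
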